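(* Let $G=(\pi,R)$ be a monogamy-of-entanglement game whose question set $X$ satisfies $|X|=2$. Then $\omega(G)=\omega^\ast(G)$.
   Context: A monogamy-of-entanglement game $G=(\pi,R)$ consists of a finite nonempty question set $X$, a probability distribution $\pi$ on $X$, a finite nonempty answer set $A$, a positive integer $m$, and positive semidefinite $m\times m$ matrices $R(a|x)$ ($a\in A$, $x\in X$) with $\sum_{a\in A}R(a|x)=\mathbb{1}$ for each $x$. The quantum value $\omega^\ast(G)$ is the supremum, over all finite-dimensional complex Hilbert spaces $\mathcal{A},\mathcal{B}$, all density operators $\rho$ on $\mathbb{C}^m\otimes\mathcal{A}\otimes\mathcal{B}$, and all families of POVMs $\{A^x_a:a\in A\}$ on $\mathcal{A}$ and $\{B^x_a:a\in A\}$ on $\mathcal{B}$ (one for each $x\in X$), of $\sum_{x\in X}\pi(x)\sum_{a\in A}\mathrm{Tr}\big((R(a|x)\otimes A^x_a\otimes B^x_a)\rho\big)$. The unentangled value $\omega(G)$ is the same supremum restricted to fully separable states $\rho=\sum_j p_j\rho^R_j\otimes\rho^A_j\otimes\rho^B_j$; it equals $\max_{f:X\to A}\big\|\sum_{x\in X}\pi(x)R(f(x)|x)\big\|$, where $\|\cdot\|$ is the operator (spectral) norm. *)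

(* Defs.v *)
(* Complex numbers are modelled by an arbitrary
   numeric closed field C (e.g. algC). *)
From HB Require Import structures.
From mathcomp Require Import all_boot all_order all_algebra.
Set Implicit Arguments. Unset Strict Implicit. Unset Printing Implicit Defensive.
Import Order.TTheory GRing.Theory Num.Theory.
Local Open Scope ring_scope.

Definition adjmx {C : numClosedFieldType} m n (M : 'M[C]_(m, n)) : 'M[C]_(n, m) :=
  (map_mx Num.conj M)^T.

Definition psd {C : numClosedFieldType} n (M : 'M[C]_n) : Prop :=
  adjmx M = M /\ forall v : 'rV[C]_n, 0 <= (v *m M *m adjmx v) 0 0.

(* Decomposition of an index of C^(m*n) = C^m (x) C^n. *)
Definition tsplit m n (k : 'I_(m * n)) : 'I_m * 'I_n :=
  enum_val (cast_ord (esym (mxvec_cast m n)) k).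

Definition tensmx {R : pzRingType} m1 n1 m2 n2
  (A : 'M[R]_(m1, n1)) (B : 'M[R]_(m2, n2)) : 'M[R]_(m1 * m2, n1 * n2) :=
  \matrix_(i, j) (A (tsplit i).1 (tsplit j).1 * B (tsplit i).2 (tsplit j).2).

Definition density {C : numClosedFieldType} n (rho : 'M[C]_n) : Prop :=
  psd rho /\ \tr rho = 1.

Definition povm {C : numClosedFieldType} (A : finType) d (P : A -> 'M[C]_d) : Prop :=
  (forall a, psd (P a)) /\ \sum_(a : A) P a = 1%:M.

Definition moe_game {C : numClosedFieldType} (X A : finType) (m : nat)
  (pi : X -> C) (R : A -> X -> 'M[C]_m) : Prop :=
  [/\ (0 < #|X|)%N, (0 < #|A|)%N, (0 < m)%N,
      (forall x, 0 <= pi x) /\ \sum_(x : X) pi x = 1 &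
      forall x, povm (fun a => R a x)].

Definition game_value {C : numClosedFieldType} (X A : finType) (m dA dB : nat)
  (pi : X -> C) (R : A -> X -> 'M[C]_m)
  (rho : 'M[C]_(m * dA * dB)) (Aop : X -> A -> 'M[C]_dA) (Bop : X -> A -> 'M[C]_dB) : C :=
  \sum_(x : X) pi x * \sum_(a : A) \tr (tensmx (tensmx (R a x) (Aop x a)) (Bop x a) *m rho).

Definition quantum_values {C : numClosedFieldType} (X A : finType) (m : nat)
  (pi : X -> C) (R : A -> X -> 'M[C]_m) (v : C) : Prop :=
  exists (dA dB : nat) (rho : 'M[C]_(m * dA * dB))
         (Aop : X -> A -> 'M[C]_dA) (Bop : X -> A -> 'M[C]_dB),
    [/\ density rho, (forall x, povm (Aop x)), (forall x, povm (Bop x)) &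
        v = game_value pi R rho Aop Bop].

Definition fully_separable {C : numClosedFieldType} (m dA dB : nat)
  (rho : 'M[C]_(m * dA * dB)) : Prop :=
  exists (k : nat) (p : 'I_k -> C) (rR : 'I_k -> 'M[C]_m)
         (rA : 'I_k -> 'M[C]_dA) (rB : 'I_k -> 'M[C]_dB),
    [/\ (forall j, 0 <= p j), \sum_(j < k) p j = 1,
        (forall j, [/\ density (rR j), density (rA j) & density (rB j)]) &
        rho = \sum_(j < k) p j *: tensmx (tensmx (rR j) (rA j)) (rB j)].

Definition unentangled_values {C : numClosedFieldType} (X A : finType) (m : nat)
  (pi : X -> C) (R : A -> X -> 'M[C]_m) (v : C) : Prop :=
  exists (dA dB : nat) (rho : 'M[C]_(m * dA * dB))
         (Aop : X -> A -> 'M[C]_dA) (Bop : X -> A -> 'M[C]_dB),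
    [/\ density rho, fully_separable rho,
        (forall x, povm (Aop x)), (forall x, povm (Bop x)) &
        v = game_value pi R rho Aop Bop].

Definition is_sup {C : numClosedFieldType} (S : C -> Prop) (w : C) : Prop :=
  (forall v, S v -> v <= w) /\ (forall u, (forall v, S v -> v <= u) -> w <= u).

Definition is_unentangled_value {C : numClosedFieldType} (X A : finType) (m : nat)
  (pi : X -> C) (R : A -> X -> 'M[C]_m) (w : C) : Prop :=
  is_sup (unentangled_values pi R) w.

Definition is_quantum_value {C : numClosedFieldType} (X A : finType) (m : nat)
  (pi : X -> C) (R : A -> X -> 'M[C]_m) (w : C) : Prop :=
  is_sup (quantum_values pi R) w.

(* Main.v *)
Require Import Defs.
From HB Require Import structures.
From mathcomp Require Import all_boot all_order all_algebra.
Import Order.TTheory GRing.Theory Num.Theory Num.Def.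
Set Implicit Arguments. Unset Strict Implicit. Unset Printing Implicit Defensive.
Local Open Scope ring_scope.

Section Adj.
Variable C : numClosedFieldType.

Lemma adjmxE m n (M : 'M[C]_(m, n)) i j : adjmx M i j = (M j i)^*.
Proof. by rewrite !mxE. Qed.

Lemma adjmxK m n (M : 'M[C]_(m, n)) : adjmx (adjmx M) = M.
Proof. by apply/matrixP => i j; rewrite !adjmxE conjCK. Qed.

Lemma adjmxM m n p (A : 'M[C]_(m, n)) (B : 'M[C]_(n, p)) :
  adjmx (A *m B) = adjmx B *m adjmx A.
Proof.
apply/matrixP => i j; rewrite adjmxE !mxE rmorph_sum; apply: eq_bigr => k _.
by rewrite !adjmxE rmorphM mulrC.
Qed.

Lemma adjmxD m n (A B : 'M[C]_(m, n)) : adjmx (A + B) = adjmx A + adjmx B.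
Proof. by apply/matrixP => i j; rewrite !(adjmxE, mxE) rmorphD. Qed.

Lemma adjmxN m n (A : 'M[C]_(m, n)) : adjmx (- A) = - adjmx A.
Proof. by apply/matrixP => i j; rewrite !(adjmxE, mxE) rmorphN. Qed.

Lemma adjmxB m n (A B : 'M[C]_(m, n)) : adjmx (A - B) = adjmx A - adjmx B.
Proof. by rewrite adjmxD adjmxN. Qed.

Lemma adjmxZ m n c (A : 'M[C]_(m, n)) : adjmx (c *: A) = c^* *: adjmx A.
Proof. by apply/matrixP => i j; rewrite !(adjmxE, mxE) rmorphM. Qed.

Lemma adjmx_scalar n (c : C) : adjmx (c%:M : 'M_n) = (c^*)%:M.
Proof.
apply/matrixP => i j; rewrite !(adjmxE, mxE) rmorphMn eq_sym; done.
Qed.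

Lemma adjmx_sum m n (I : finType) (F : I -> 'M[C]_(m, n)) :
  adjmx (\sum_i F i) = \sum_i adjmx (F i).
Proof.
apply/matrixP => i j; rewrite adjmxE !summxE rmorph_sum.
by apply: eq_bigr => k _; rewrite adjmxE.
Qed.

Lemma row_quad m n (A : 'M[C]_(m, n)) (N : 'M[C]_n) i :
  (A *m N *m adjmx A) i i = (row i A *m N *m adjmx (row i A)) 0 0.
Proof.
rewrite !mxE; apply: eq_bigr => l _; rewrite !mxE; congr (_ * _).
by apply: eq_bigr => r _; rewrite !mxE.
Qed.

Lemma unitary_adj n (U : 'M[C]_n) : U \is unitarymx ->
  U *m adjmx U = 1%:M /\ adjmx U *m U = 1%:M.
Proof.
move=> hU.
have E : adjmx U = (U ^t conjC)%sesqui by rewrite /adjmx map_trmx.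
have h1 : U *m adjmx U = 1%:M by rewrite E; apply/eqP; exact: hU.
split => //; rewrite E -invmx_unitary // mulVmx //; exact: unitarymx_unit.
Qed.

Lemma herm_spec n (M : 'M[C]_n) : adjmx M = M ->
    [/\ spectralmx M *m adjmx (spectralmx M) = 1%:M,
        adjmx (spectralmx M) *m spectralmx M = 1%:M,
        M = adjmx (spectralmx M) *m diag_mx (spectral_diag M) *m spectralmx M
      & forall i, spectral_diag M 0 i \is Num.real].
Proof.
move=> hM.
have hh : M \is hermsymmx.
  apply/is_hermitianmxP; rewrite expr0 scale1r -map_trmx.
  by rewrite -[LHS]hM.
have hU := spectral_unitarymx M.
have [h1 h2] := unitary_adj hU.
split => //.
  have := orthomx_spectralP (hermitian_normalmx hh) => /= E.
  by rewrite {1}E invmx_unitary // /adjmx map_trmx.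
move=> i; have /mxOverP := hermitian_spectral_diag_real hh; exact.
Qed.

Lemma herm_decomp n (M : 'M[C]_n) : adjmx M = M ->
  exists (U : 'M[C]_n) (d : 'rV[C]_n),
    [/\ U *m adjmx U = 1%:M, adjmx U *m U = 1%:M,
        M = adjmx U *m diag_mx d *m U & forall i, d 0 i \is Num.real].
Proof.
move=> hM; have [? ? ? ?] := herm_spec hM.
by exists (spectralmx M), (spectral_diag M); split.
Qed.

End Adj.
Section Psd.
Variable C : numClosedFieldType.

Lemma quad_diag n (N : 'M[C]_n) (w : 'rV[C]_n) :
  (forall k l, k != l -> N k l = 0) ->
  (w *m N *m adjmx w) 0 0 = \sum_k N k k * (w 0 k * (w 0 k)^*).
Proof.
move=> hN; rewrite !mxE; apply: eq_bigr => l _; rewrite adjmxE !mxE.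
rewrite (bigD1 l) //= big1 ?addr0; first by rewrite mulrCA mulrA [_ * N l l]mulrC -mulrA.
by move=> r hr; rewrite hN ?mulr0.
Qed.

Lemma psd_diag n (N : 'M[C]_n) :
  (forall k l, k != l -> N k l = 0) -> (forall k, 0 <= N k k) -> psd N.
Proof.
move=> h0 hpos; split.
  apply/matrixP => i j; rewrite adjmxE; have [->|hij] := eqVneq i j.
    by rewrite conj_Creal // ger0_real.
  by rewrite h0 ?h0 ?rmorph0 // eq_sym.
move=> v; rewrite quad_diag //; apply: sumr_ge0 => k _.
by rewrite mulr_ge0 ?mul_conjC_ge0.
Qed.

Lemma psd_conj k n (U : 'M[C]_(k, n)) (N : 'M[C]_k) :
  psd N -> psd (adjmx U *m N *m U).
Proof.
move=> [hN hq]; split.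
  by rewrite !adjmxM adjmxK hN mulmxA.
move=> v.
have -> : v *m (adjmx U *m N *m U) *m adjmx v =
   (v *m adjmx U) *m N *m adjmx (v *m adjmx U).
  by rewrite adjmxM adjmxK !mulmxA.
exact: hq.
Qed.

Lemma psd0 n : psd (0 : 'M[C]_n).
Proof. by apply: psd_diag => *; rewrite mxE. Qed.

Lemma psdD n (A B : 'M[C]_n) : psd A -> psd B -> psd (A + B).
Proof.
move=> [hA qA] [hB qB]; split; first by rewrite adjmxD hA hB.
move=> v; rewrite mulmxDr mulmxDl mxE; exact: addr_ge0.
Qed.

Lemma psd_sum n (I : finType) (F : I -> 'M[C]_n) :
  (forall i, psd (F i)) -> psd (\sum_i F i).
Proof.
move=> h; apply: (big_ind (@psd C n)); [exact: psd0| exact: psdD| by move=> *].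
Qed.

Lemma psdZ n c (A : 'M[C]_n) : 0 <= c -> psd A -> psd (c *: A).
Proof.
move=> hc [hA qA]; split; first by rewrite adjmxZ hA conj_Creal // ger0_real.
by move=> v; rewrite -scalemxAr -scalemxAl mxE mulr_ge0.
Qed.

Lemma psd_scalar n (c : C) : 0 <= c -> psd (c%:M : 'M_n).
Proof.
move=> hc; apply: psd_diag => [k l kl|k]; rewrite mxE ?eqxx //.
by rewrite (negbTE kl).
Qed.

Lemma psd1 n : psd (1%:M : 'M[C]_n).
Proof. exact: psd_scalar. Qed.

Lemma psd_decomp n (M : 'M[C]_n) : psd M ->
  exists (U : 'M[C]_n) (d : 'rV[C]_n),
    [/\ U *m adjmx U = 1%:M, adjmx U *m U = 1%:M,
        M = adjmx U *m diag_mx d *m U & forall i, 0 <= d 0 i].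
Proof.
move=> [hM qM]; have [U [d [h1 h2 E _]]] := herm_decomp hM.
exists U, d; split => // i.
have : (U *m M *m adjmx U) i i = d 0 i.
  rewrite E !mulmxA h1 mul1mx -mulmxA h1 mulmx1 mxE eqxx mulr1n //.
by move=> <-; rewrite row_quad.
Qed.

Lemma trace_mul_diag n (X : 'M[C]_n) (d : 'rV[C]_n) :
  \tr (X *m diag_mx d) = \sum_k X k k * d 0 k.
Proof. by rewrite mul_mx_diag /mxtrace; apply: eq_bigr => k _; rewrite mxE. Qed.

Lemma psd_trace n (P rho : 'M[C]_n) : psd P -> density rho -> 0 <= \tr (P *m rho).
Proof.
move=> hP [hr _]; have [U [d [h1 h2 E hd]]] := psd_decomp hr.
rewrite E !mulmxA mxtrace_mulC !mulmxA trace_mul_diag.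
apply: sumr_ge0 => k _; apply: mulr_ge0 => //.
rewrite row_quad; exact: hP.2.
Qed.

End Psd.
Section Tens.
Variable C : numClosedFieldType.

Lemma tsplit_bij m n : bijective (@tsplit m n).
Proof.
exists (fun p => cast_ord (mxvec_cast m n) (enum_rank p)) => k.
  by rewrite /tsplit enum_valK cast_ordKV.
by rewrite /tsplit cast_ordK enum_rankK.
Qed.

Lemma tsplit_eq m n (k l : 'I_(m * n)) : (tsplit k == tsplit l) = (k == l).
Proof. exact/inj_eq/bij_inj/tsplit_bij. Qed.

Lemma sum_tsplit m n (F : 'I_m -> 'I_n -> C) :
  \sum_(k < m * n) F (tsplit k).1 (tsplit k).2 = \sum_i \sum_j F i j.
Proof.
rewrite pair_big /= (reindex (@tsplit m n)) //=.
exact/onW_bij/tsplit_bij.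
Qed.

Lemma tensmx_mul m1 n1 p1 m2 n2 p2 (A : 'M[C]_(m1, n1)) (B : 'M[C]_(m2, n2))
  (A' : 'M[C]_(n1, p1)) (B' : 'M[C]_(n2, p2)) :
  tensmx A B *m tensmx A' B' = tensmx (A *m A') (B *m B').
Proof.
apply/matrixP => i j; rewrite [in RHS]mxE !mxE big_distrlr /=.
rewrite -(sum_tsplit (fun r s => A (tsplit i).1 r * A' r (tsplit j).1 *
   (B (tsplit i).2 s * B' s (tsplit j).2))).
by apply: eq_bigr => k _; rewrite !mxE mulrACA.
Qed.

Lemma trace_tensmx m n (A : 'M[C]_m) (B : 'M[C]_n) :
  \tr (tensmx A B) = \tr A * \tr B.
Proof.
rewrite /mxtrace big_distrlr /=.
rewrite -(sum_tsplit (fun r s => A r r * B s s)).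
by apply: eq_bigr => k _; rewrite !mxE.
Qed.

Lemma adjmx_tens m1 n1 m2 n2 (A : 'M[C]_(m1, n1)) (B : 'M[C]_(m2, n2)) :
  adjmx (tensmx A B) = tensmx (adjmx A) (adjmx B).
Proof. by apply/matrixP => i j; rewrite !mxE rmorphM. Qed.

Lemma tensmx1 m n : tensmx (1%:M : 'M[C]_m) (1%:M : 'M[C]_n) = 1%:M.
Proof.
apply/matrixP => i j; rewrite !mxE -tsplit_eq.
case: (tsplit i) (tsplit j) => [a b] [c d] /=; rewrite xpair_eqE.
by case: (a == c); case: (b == d); rewrite /= ?mulr1n ?mulr0n ?mul1r ?mul0r.
Qed.

Lemma tensmx_suml m1 n1 m2 n2 (I : finType) (F : I -> 'M[C]_(m1, n1))
  (B : 'M[C]_(m2, n2)) :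
  tensmx (\sum_i F i) B = \sum_i tensmx (F i) B.
Proof.
apply/matrixP => i j; rewrite summxE !mxE summxE mulr_suml.
by apply: eq_bigr => k _; rewrite mxE.
Qed.

Lemma tensmx_sumr m1 n1 m2 n2 (I : finType) (A : 'M[C]_(m1, n1))
  (F : I -> 'M[C]_(m2, n2)) :
  tensmx A (\sum_i F i) = \sum_i tensmx A (F i).
Proof.
apply/matrixP => i j; rewrite summxE !mxE summxE mulr_sumr.
by apply: eq_bigr => k _; rewrite mxE.
Qed.

Lemma tensmxZl m1 n1 m2 n2 c (A : 'M[C]_(m1, n1)) (B : 'M[C]_(m2, n2)) :
  tensmx (c *: A) B = c *: tensmx A B.
Proof. by apply/matrixP => i j; rewrite !mxE mulrA. Qed.

Lemma tensmxZr m1 n1 m2 n2 c (A : 'M[C]_(m1, n1)) (B : 'M[C]_(m2, n2)) :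
  tensmx A (c *: B) = c *: tensmx A B.
Proof. by apply/matrixP => i j; rewrite !mxE mulrCA. Qed.

Lemma tensmxDl m1 n1 m2 n2 (A A' : 'M[C]_(m1, n1)) (B : 'M[C]_(m2, n2)) :
  tensmx (A + A') B = tensmx A B + tensmx A' B.
Proof. by apply/matrixP => i j; rewrite !mxE mulrDl. Qed.

Lemma tensmxDr m1 n1 m2 n2 (A : 'M[C]_(m1, n1)) (B B' : 'M[C]_(m2, n2)) :
  tensmx A (B + B') = tensmx A B + tensmx A B'.
Proof. by apply/matrixP => i j; rewrite !mxE mulrDr. Qed.

Lemma tensmxNl m1 n1 m2 n2 (A : 'M[C]_(m1, n1)) (B : 'M[C]_(m2, n2)) :
  tensmx (- A) B = - tensmx A B.
Proof. by apply/matrixP => i j; rewrite !mxE mulNr. Qed.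

Lemma tensmxNr m1 n1 m2 n2 (A : 'M[C]_(m1, n1)) (B : 'M[C]_(m2, n2)) :
  tensmx A (- B) = - tensmx A B.
Proof. by apply/matrixP => i j; rewrite !mxE mulrN. Qed.

Lemma tensmxBl m1 n1 m2 n2 (A A' : 'M[C]_(m1, n1)) (B : 'M[C]_(m2, n2)) :
  tensmx (A - A') B = tensmx A B - tensmx A' B.
Proof. by rewrite tensmxDl tensmxNl. Qed.

Lemma tensmxBr m1 n1 m2 n2 (A : 'M[C]_(m1, n1)) (B B' : 'M[C]_(m2, n2)) :
  tensmx A (B - B') = tensmx A B - tensmx A B'.
Proof. by rewrite tensmxDr tensmxNr. Qed.

Lemma psd_tens m n (A : 'M[C]_m) (B : 'M[C]_n) :
  psd A -> psd B -> psd (tensmx A B).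
Proof.
move=> /psd_decomp [U [d [_ _ EA hd]]] /psd_decomp [V [e [_ _ EB he]]].
rewrite EA EB -!tensmx_mul -adjmx_tens.
apply: psd_conj; apply: psd_diag => [k l kl|k].
  rewrite !mxE -tsplit_eq in kl *.
  case: (tsplit k) (tsplit l) kl => [a b] [c d'] /=; rewrite xpair_eqE negb_and.
  by case/orP => /negbTE ->; rewrite ?mulr0n ?mul0r ?mulr0.
by rewrite !mxE !eqxx !mulr1n mulr_ge0.
Qed.

End Tens.
Section Misc.
Variable C : numClosedFieldType.

Lemma sum2 (X : finType) (x1 x2 : X) (V : nmodType) (F : X -> V) :
  x1 != x2 -> #|X| = 2%N -> \sum_x F x = F x1 + F x2.
Proof.
move=> hne hX; rewrite (bigD1 x1) //= (bigD1 x2) 1?eq_sym //= big1 ?addr0 //.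
move=> y /andP [hy1 hy2]; exfalso.
have hu : uniq [:: x1; x2; y] by rewrite /= !inE negb_or hne (eq_sym x1 y) (eq_sym x2 y) hy1 hy2.
have := uniq_leq_size hu (fun z _ => mem_enum X z).
by rewrite -cardE hX.
Qed.

Lemma max_exists (T : finType) (g : T -> C) (t0 : T) :
  (forall t, g t \is Num.real) -> exists t1, forall t, g t <= g t1.
Proof.
move=> hr.
suff [t1 h] : exists t1, forall t, t \in enum T -> g t <= g t1.
  by exists t1 => t; apply: h; rewrite mem_enum.
elim: (enum T) => [|x s [t1 IH]]; first by exists t0.
have /orP [h|h] := real_leVge (hr x) (hr t1).
  exists t1 => t; rewrite inE => /orP [/eqP -> //|]; exact: IH.
exists x => t; rewrite inE => /orP [/eqP -> //|ht].
exact: le_trans (IH _ ht) h.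
Qed.

Lemma psd_sum_cond n (I : finType) (P : pred I) (F : I -> 'M[C]_n) :
  (forall i, psd (F i)) -> psd (\sum_(i | P i) F i).
Proof.
move=> h; apply: (big_ind (@psd C n)); [exact: psd0| exact: psdD| by move=> *].
Qed.

Lemma povm_compl (A : finType) d (P : A -> 'M[C]_d) a :
  povm P -> psd (1%:M - P a).
Proof.
move=> [hp hs]; rewrite -hs (bigD1 a) //= addrC addrK.
exact: psd_sum_cond.
Qed.

End Misc.

Lemma mxtrace_sumI (C : numClosedFieldType) n (I : finType) (F : I -> 'M[C]_n) :
  \tr (\sum_i F i) = \sum_i \tr (F i).
Proof.
rewrite /mxtrace exchange_big /=; apply: eq_bigr => k _; exact: summxE.
Qed.
Lemma tens_scalar (C : numClosedFieldType) m n p (c : C) :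
  tensmx (tensmx (c%:M : 'M[C]_m) (1%:M : 'M_n)) (1%:M : 'M_p) = c%:M.
Proof.
have -> : (c%:M : 'M[C]_m) = c *: 1%:M by rewrite scalemx1.
by rewrite !tensmxZl !tensmx1 scalemx1.
Qed.

Unset Implicit Arguments.

Theorem mainTheorem3 (C : numClosedFieldType) (X A : finType) (m : nat)
  (pi : X -> C) (R : A -> X -> 'M[C]_m) :
  moe_game pi R -> #|X| = 2%N ->
  exists w : C, is_unentangled_value pi R w /\ is_quantum_value pi R w.
Proof.
move=> [hX0 hA0 hm0 [hpi0 hpi1] hR] hX2.
have /card_gt1P [x1 [x2 [_ _ hne]]] : (1 < #|X|)%N by rewrite hX2.
have Hs := fun (V : nmodType) (F : X -> V) => sum2 F hne hX2.
pose M (a b : A) := pi x1 *: R a x1 + pi x2 *: R b x2.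
have hpiR x : (pi x)^* = pi x by rewrite conj_Creal // ger0_real.
have hMh a b : adjmx (M a b) = M a b.
  by rewrite /M adjmxD !adjmxZ !hpiR ((hR x1).1 a).1 ((hR x2).1 b).1.
pose g (t : (A * A) * 'I_m) := spectral_diag (M t.1.1 t.1.2) 0 t.2.
have [a0 _] : exists a : A, a \in A by apply/card_gt0P.
pose i0 : 'I_m := Ordinal hm0.
have greal t : g t \is Num.real.
  by have [_ _ _ h] := herm_spec (hMh t.1.1 t.1.2); exact: h.
have [[[aS bS] iS] hmax] := max_exists ((a0, a0), i0) greal.
pose w := g ((aS, bS), iS).
have C1 a b : psd (w%:M - M a b).
  have [h1 h2 E hr] := herm_spec (hMh a b).
  set U := spectralmx (M a b) in h1 h2 E *.
  set d := spectral_diag (M a b) in E hr *.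
  have -> : w%:M - M a b = adjmx U *m (w%:M - diag_mx d) *m U.
    by rewrite mulmxBr mulmxBl -E mul_mx_scalar -scalemxAl h2 scalemx1.
  apply: psd_conj; apply: psd_diag => [k l kl|k].
    by rewrite !mxE (negbTE kl) !mulr0n subrr.
  by rewrite !mxE !eqxx !mulr1n subr_ge0; exact: (hmax ((a, b), k)).
have C2 v : quantum_values pi R v -> v <= w.
  move=> [dA [dB [rho [Aop [Bop [hrho hAop hBop ->]]]]]].
  pose T x a := tensmx (tensmx (R a x) (Aop x a)) (Bop x a).
  have EV : game_value pi R rho Aop Bop = \tr ((\sum_x pi x *: \sum_a T x a) *m rho).
    rewrite /game_value mulmx_suml mxtrace_sumI; apply: eq_bigr => x _.
    by rewrite -scalemxAl mxtraceZ mulmx_suml mxtrace_sumI.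
  pose W' := \sum_a \sum_b tensmx (tensmx (M a b) (Aop x1 a)) (Bop x2 b).
  have EW' : pi x1 *: \sum_a tensmx (tensmx (R a x1) (Aop x1 a)) 1%:M
      + pi x2 *: \sum_b tensmx (tensmx (R b x2) 1%:M) (Bop x2 b) = W'.
    rewrite -(hBop x2).2 -(hAop x1).2.
    have L1 : \sum_a tensmx (tensmx (R a x1) (Aop x1 a)) (\sum_b Bop x2 b)
        = \sum_a \sum_b tensmx (tensmx (R a x1) (Aop x1 a)) (Bop x2 b).
      by apply: eq_bigr => a _; rewrite tensmx_sumr.
    have L2 : \sum_b tensmx (tensmx (R b x2) (\sum_a Aop x1 a)) (Bop x2 b)
        = \sum_a \sum_b tensmx (tensmx (R b x2) (Aop x1 a)) (Bop x2 b).
      by rewrite exchange_big; apply: eq_bigr => b _; rewrite tensmx_sumr tensmx_suml.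
    rewrite L1 L2 !scaler_sumr -big_split /=; apply: eq_bigr => a _.
    rewrite !scaler_sumr -big_split /=; apply: eq_bigr => b _.
    by rewrite /M !tensmxDl !tensmxZl.
  have HW : psd (w%:M - \sum_x pi x *: \sum_a T x a).
    rewrite (Hs _ (fun x => pi x *: \sum_a T x a)) /=.
    have -> : w%:M - (pi x1 *: \sum_a T x1 a + pi x2 *: \sum_a T x2 a) =
       (W' - (pi x1 *: \sum_a T x1 a + pi x2 *: \sum_a T x2 a)) + (w%:M - W').
      by rewrite [RHS]addrC addrA subrK.
    apply: psdD.
      rewrite -EW' opprD addrACA -!scalerBr -!sumrB.
      apply: psdD; apply: psdZ; rewrite ?hpi0 //; apply: psd_sum => a; rewrite /T.
        rewrite -tensmxBr; apply: psd_tens; last exact: povm_compl.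
        by apply: psd_tens; [exact: (hR x1).1 | exact: (hAop x1).1].
      rewrite -tensmxBl -tensmxBr; apply: psd_tens; last exact: (hBop x2).1.
      by apply: psd_tens; [exact: (hR x2).1 | exact: povm_compl].
    have -> : (w%:M : 'M_(m * dA * dB)) =
        \sum_a \sum_b tensmx (tensmx (w%:M : 'M_m) (Aop x1 a)) (Bop x2 b).
      rewrite (eq_bigr (fun a => tensmx (tensmx (w%:M : 'M_m) (Aop x1 a)) (\sum_b Bop x2 b))); last first.
        by move=> a _; rewrite tensmx_sumr.
      by rewrite (hBop x2).2 -tensmx_suml -tensmx_sumr (hAop x1).2 tens_scalar.
    rewrite /W' -sumrB; apply: psd_sum => a; rewrite -sumrB; apply: psd_sum => b.
    rewrite -!tensmxBl; apply: psd_tens; last exact: (hBop x2).1.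
    by apply: psd_tens; [exact: C1 | exact: (hAop x1).1].
  rewrite EV -subr_ge0.
  have := psd_trace HW hrho.
  by rewrite mulmxBl linearB /= mul_scalar_mx linearZ /= hrho.2 mulr1.
have C3 : unentangled_values pi R w.
  have [h1 h2 E hr] := herm_spec (hMh aS bS).
  set U := spectralmx (M aS bS) in h1 h2 E *.
  set d := spectral_diag (M aS bS) in E hr *.
  pose v := row iS U.
  pose rhoR := adjmx v *m v.
  pose f x := if x == x1 then aS else bS.
  pose Aop x a := (((f x == a)%:R : C)%:M : 'M[C]_1).
  have hv1 : (v *m adjmx v) 0 0 = 1.
    have := row_quad U 1%:M iS; rewrite !mulmx1 h1 mxE eqxx /= => <-; done.
  have hrhoR : density rhoR.
    split; last by rewrite mxtrace_mulC trace_mx11.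
    have -> : rhoR = adjmx v *m (1%:M : 'M_1) *m v by rewrite /rhoR mulmx1.
    apply: psd_conj; exact: psd1.
  have hd1 : density (1%:M : 'M[C]_1) by split; [exact: psd1 | rewrite mxtrace1].
  have hAop x : povm (Aop x).
    split; first by move=> a; apply: psd_scalar; exact: ler0n.
    rewrite -raddf_sum /= (bigD1 (f x)) //= eqxx big1 ?addr0 //.
    by move=> a ha; rewrite eq_sym (negbTE ha).
  exists 1%N, 1%N, (tensmx (tensmx rhoR 1%:M) 1%:M), Aop, Aop; split => //.
  - split; first by apply: psd_tens; [apply: psd_tens; [exact: hrhoR.1|exact: psd1]|exact: psd1].
    by rewrite !trace_tensmx hrhoR.2 mxtrace1 !mulr1.
  - exists 1%N, (fun _ => 1), (fun _ => rhoR), (fun _ => 1%:M), (fun _ => 1%:M).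
    by split => //; rewrite big_ord1 // scale1r.
  rewrite /game_value.
  have Hx x : \sum_a \tr (tensmx (tensmx (R a x) (Aop x a)) (Aop x a)
       *m tensmx (tensmx rhoR 1%:M) 1%:M) = \tr (R (f x) x *m rhoR).
    rewrite (bigD1 (f x)) //= big1 ?addr0.
      by rewrite !tensmx_mul !mulmx1 !trace_tensmx /Aop !mxtrace_scalar eqxx !mulr1.
    move=> a ha; rewrite !tensmx_mul !mulmx1 !trace_tensmx /Aop !mxtrace_scalar.
    by rewrite eq_sym (negbTE ha) !mulr0.
  rewrite (eq_bigr (fun x => pi x * \tr (R (f x) x *m rhoR))); last by move=> x _; rewrite Hx.
  have hne' : (x2 == x1) = false by rewrite eq_sym (negbTE hne).
  rewrite Hs /f eqxx hne' -!mxtraceZ -mxtraceD !scalemxAl -mulmxDl -/(M aS bS).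
  rewrite /rhoR mulmxA mxtrace_mulC mulmxA trace_mx11 /v -row_quad.
  by rewrite E !mulmxA h1 mul1mx -mulmxA h1 mulmx1 mxE eqxx mulr1n.
exists w; split; split.
- move=> v [dA [dB [rho [Aop [Bop [h1 _ h3 h4 h5]]]]]]; apply: C2.
  by exists dA, dB, rho, Aop, Bop; split.
- by move=> u hu; apply: hu.
- exact: C2.
- move=> u hu; apply: hu.
  move: C3 => [dA [dB [rho [Aop [Bop [h1 _ h3 h4 h5]]]]]].
  by exists dA, dB, rho, Aop, Bop; split.
Qed.
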